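(* Consider a check node decoder (CND) whose EXIT function on the BEC is $$I_{E,C}(p)=\sum_{j\ge2}\rho^{(\mathrm{SPC})}_j(1-p)^{j-1}+\sum_{i}\rho_i\,I^{(i)}_{E,C}(p),$$ where the nonnegative edge fractions $\rho^{(\mathrm{SPC})}_j$ and $\rho_i$ sum to $1$, and for each $i$, $I^{(i)}_{E,C}$ is the check-node EXIT function of an $(n_i,k_i)$ binary linear code $\mathcal{C}_i$ with $n_i\ge2$, $k_i\ge1$ and $d_{\min}(\mathcal{C}_i)\ge2$. Then $$\frac{\mathrm{d}I_{E,C}(p)}{\mathrm{d}p}\Big|_{p=0}=-\rho'_{\mathrm{SPC}}(1)-\sum_{i:\,d_{\min}(\mathcal{C}_i)=2}\frac{2\rho_i}{n_i}\,\Delta^{(i)}_{n_i-2},$$ i.e. only the component codes $\mathcal{C}_i$ with minimum distance exactly $2$ (together with the SPC terms) contribute.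
   Context: $\rho_{\mathrm{SPC}}(x)=\sum_{j\ge2}\rho^{(\mathrm{SPC})}_jx^{j-1}$, so $\rho'_{\mathrm{SPC}}(1)=\sum_{j\ge2}(j-1)\rho^{(\mathrm{SPC})}_j$. For an $(n,k)$ code with $k\times n$ generator matrix $\mathbf{G}$ of rank $k$: $\tilde e_g=\sum_{|S|=g}\operatorname{rank}(\mathbf{G}_S)$ (sum over $g$-element sets $S$ of columns), $a_t=(n-t)\tilde e_{n-t}-(t+1)\tilde e_{n-t-1}$, and its check-node EXIT function is $I_E(p)=1-\frac1n\sum_{t=0}^{n-1}a_tp^t(1-p)^{n-t-1}$. $\Delta^{(i)}_{n_i-2}=\sum_{|S|=n_i-2}\big(k_i-\operatorname{rank}(\mathbf{G}^{(i)}_S)\big)$, the sum over all $(n_i-2)$-element column sets of a generator matrix $\mathbf{G}^{(i)}$ of $\mathcal{C}_i$ (this value does not depend on the choice of generator matrix). *)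

(* Defs.v *)
From HB Require Import structures.
From mathcomp Require Import all_boot all_order all_algebra all_field.
Set Implicit Arguments. Unset Strict Implicit. Unset Printing Implicit Defensive.
Import Order.TTheory GRing.Theory Num.Theory.
Local Open Scope ring_scope.

(* Binary linear codes given by a k x n generator matrix over GF(2). *)

Definition colS (k n : nat) (G : 'M['F_2]_(k, n)) (S : {set 'I_n})
  : 'M['F_2]_(k, #|S|) := colsub (fun j : 'I_#|S| => enum_val j) G.

Definition etilde (k n : nat) (G : 'M['F_2]_(k, n)) (g : nat) : nat :=
  (\sum_(S : {set 'I_n} | #|S| == g) \rank (colS G S))%N.

Definition acoef (R : ringType) (k n : nat) (G : 'M['F_2]_(k, n)) (t : nat) : R :=
  (n - t)%:R * (etilde G (n - t))%:R - (t.+1)%:R * (etilde G (n - t - 1))%:R.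

Definition exitCN (R : fieldType) (k n : nat) (G : 'M['F_2]_(k, n)) : {poly R} :=
  1 - (n%:R)^-1 *: \sum_(t < n) (acoef R G t *: ('X ^+ t * (1 - 'X) ^+ (n - t - 1))).

Definition Delta (k n : nat) (G : 'M['F_2]_(k, n)) : nat :=
  (\sum_(S : {set 'I_n} | #|S| == (n - 2)%N) (k - \rank (colS G S)))%N.

Definition wt (n : nat) (c : 'rV['F_2]_n) : nat := #|[set j | c 0 j != 0]|.

(* Minimum distance: minimum weight of a nonzero codeword (codeword = vector
   in the row space of G); equals n.+1 if there is no nonzero codeword. *)
Definition dmin (k n : nat) (G : 'M['F_2]_(k, n)) : nat :=
  \big[minn/n.+1]_(c : 'rV['F_2]_n | (c <= G)%MS && (c != 0)) wt c.

Definition exitCND (R : fieldType) (J m : nat) (rhoS : nat -> R)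
  (rho : 'I_m -> R) (k n : 'I_m -> nat)
  (G : forall i : 'I_m, 'M['F_2]_(k i, n i)) : {poly R} :=
  \sum_(2 <= j < J.+1) (rhoS j *: (1 - 'X) ^+ (j - 1))
  + \sum_(i < m) (rho i *: exitCN R (G i)).

(* Main.v *)
Require Import Defs.
From HB Require Import structures.
From mathcomp Require Import all_boot all_order all_algebra all_field.
Import Order.TTheory GRing.Theory Num.Theory.
Local Open Scope ring_scope.

Lemma bm (I : eqType) (r : seq I) (P : pred I) (F : I -> nat) x c :
  c \in r -> P c -> (\big[minn/x]_(i <- r | P i) F i <= F c)%N.
Proof.
elim: r => [//|a r IH]; rewrite inE big_cons => /orP[/eqP<- ->|Hc Pc].
  by rewrite geq_minl.
case: (P a); last exact: IH.
by rewrite (leq_trans (geq_minr _ _)) // IH.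
Qed.

Lemma dmin_le k n (G : 'M['F_2]_(k, n)) c :
  (c <= G)%MS -> c != 0 -> (dmin G <= wt c)%N.
Proof.
move=> Hc Hn; rewrite /dmin; apply: bm; first exact: mem_index_enum.
by rewrite Hc Hn.
Qed.

Lemma colS_mul k n (G : 'M['F_2]_(k, n)) S (u : 'rV_k) l :
  (u *m colS G S) 0 l = (u *m G) 0 (enum_val l).
Proof. by rewrite !mxE; apply: eq_bigr => x _; rewrite /colS !mxE. Qed.

Lemma rank_colS k n (G : 'M['F_2]_(k, n)) (S : {set 'I_n}) :
  \rank G = k -> (n - #|S| < dmin G)%N -> \rank (colS G S) = k.
Proof.
move=> hr hd; apply/eqP; rewrite eqn_leq rank_leq_row /=.
rewrite leqNgt; apply/negP => hlt.
set K := kermx (colS G S).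
have K0 : K != 0.
  by rewrite -mxrank_eq0 /K mxrank_ker -lt0n subn_gt0.
have [i Hi] : exists i, row i K != 0.
  case: (pickP (fun i => row i K != 0)) => [i Hi|H0]; first by exists i.
  case/negP: K0; apply/eqP/row_matrixP => i; rewrite row0.
  by apply/eqP; move: (H0 i) => /= /negbFE.
set u := row i K.
have uA : u *m colS G S = 0 by rewrite /u -row_mul mulmx_ker row0.
set c := u *m G.
have cn0 : c != 0.
  by rewrite /c mulmx_free_eq0 // /row_free hr.
have := @dmin_le _ _ G c (submxMl u G) cn0.
move/leq_trans => /(_ (n - #|S|)%N) H.
have : (dmin G <= n - #|S|)%N.
  apply: H; have -> : (n - #|S| = #|~: S|)%N by rewrite -[n in (n - _)%N](card_ord n) -(cardsC S) addKn.
  rewrite /wt subset_leq_card //.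
  apply/subsetP => j; rewrite inE => cj; rewrite inE; apply/negP => jS.
  move: cj; rewrite -(enum_rankK_in jS jS) -colS_mul uA mxE.
  by rewrite eqxx.
by rewrite leqNgt hd.
Qed.

Lemma card_sz n g : #|[pred S : {set 'I_n} | #|S| == g]| = 'C(n, g).
Proof. have := (@card_draws 'I_n g); rewrite card_ord => <-.
by apply: eq_card => S; rewrite inE. Qed.

Lemma etilde_full k n (G : 'M['F_2]_(k, n)) g :
  \rank G = k -> (n - g < dmin G)%N -> (g <= n)%N -> etilde G g = ('C(n, g) * k)%N.
Proof.
move=> hr hd hg; rewrite /etilde (eq_bigr (fun _ => k)) => [|S /eqP HS].
  by rewrite sum_nat_const card_sz.
by rewrite rank_colS // HS.
Qed.

Lemma Delta_split k n (G : 'M['F_2]_(k, n)) : (2 <= n)%N ->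
  (etilde G (n - 2) + Delta G = 'C(n, 2) * k)%N.
Proof.
move=> h; rewrite /etilde /Delta -big_split /= (eq_bigr (fun _ => k)) => [|S _].
  rewrite sum_nat_const card_sz.
  by rewrite bin_sub.
by rewrite subnKC // rank_leq_row.
Qed.

Lemma Delta0 k n (G : 'M['F_2]_(k, n)) :
  \rank G = k -> (2 <= n)%N -> (3 <= dmin G)%N -> Delta G = 0%N.
Proof.
move=> hr hn hd; rewrite /Delta big1 // => S /eqP HS.
by rewrite rank_colS ?subnn // HS subKn.
Qed.

Lemma dc (R : fieldType) (p : {poly R}) : p^`().[0] = p`_1.
Proof. by rewrite horner_coef0 coef_deriv. Qed.

Lemma L_one (R : fieldType) m : ((1 - 'X : {poly R}) ^+ m).[0] = 1.
Proof. by rewrite horner_exp hornerD hornerN hornerX hornerC subr0 expr1n. Qed.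

Lemma L_d (R : fieldType) m : ((1 - 'X : {poly R}) ^+ m)`_1 = - m%:R.
Proof.
rewrite -dc; elim: m => [|m IH]; first by rewrite expr0 derivC horner0 oppr0.
rewrite exprS derivM hornerD !hornerM IH L_one derivB derivC derivX.
rewrite ?hornerD ?hornerN ?hornerC ?hornerX ?sub0r ?subr0 mulN1r !mul1r.
by rewrite mulrS opprD.
Qed.

Lemma exitCN_c1 (R : realFieldType) k n (G : 'M['F_2]_(k, n)) :
  (2 <= n)%N -> \rank G = k -> (2 <= dmin G)%N ->
  (exitCN R G)`_1 = - (2 / n%:R * (Delta G)%:R).
Proof.
case: n G => [|[|n]] G // _ hr hd.
rewrite /exitCN coefB coef1 /= sub0r coefZ coef_sum.
rewrite 2!big_ord_recl big1 => [|t _]; last first.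
  by rewrite coefZ coefXnM /= mulr0.
rewrite addr0 !coefZ expr0 mul1r L_d coefXnM /= -horner_coef0 L_one mulr1.
rewrite /acoef !subn0 (_ : bump 0 0 = 1%N) // -subnDA /=.
have E1 : etilde G n.+2 = k.
  rewrite etilde_full // ?binn ?mul1n // subnn; by case: (dmin G) hd.
have E2 : etilde G (n.+2 - 1) = (n.+2 * k)%N.
  by rewrite etilde_full ?subKn ?leq_subr // bin_sub // bin1.
have Hn : ((n.+2 - 1) * (n.+2 * k) = 2 * etilde G (n.+2 - 2) + 2 * Delta G)%N.
  rewrite -mulnDr Delta_split // !mulnA -mul_bin_diag bin1 subn1 /=.
  by rewrite [(n.+1 * _)%N]mulnC.
have A0 : (n.+2%:R * (etilde G n.+2)%:R - 1 * (etilde G (n.+2 - 1))%:R : R) = 0.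
  by rewrite E1 E2 natrM mul1r subrr.
have A1 : ((n.+2 - 1)%:R * (etilde G (n.+2 - 1))%:R -
     2 * (etilde G (n.+2 - (1 + 1)))%:R : R) = 2 * (Delta G)%:R.
  rewrite E2 -natrM Hn natrD !natrM.
  by rewrite addrAC subrr add0r.
rewrite A0 A1 mul0r add0r.
by rewrite mulrCA mulrA.
Qed.

Theorem mainTheorem6 (R : realFieldType) (J m : nat) (rhoS : nat -> R)
  (rho : 'I_m -> R) (k n : 'I_m -> nat)
  (G : forall i : 'I_m, 'M['F_2]_(k i, n i))
  (hrhoS : forall j, (2 <= j <= J)%N -> 0 <= rhoS j)
  (hrho : forall i, 0 <= rho i)
  (hsum : \sum_(2 <= j < J.+1) rhoS j + \sum_(i < m) rho i = 1)
  (hn : forall i, (2 <= n i)%N)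
  (hk : forall i, (1 <= k i)%N)
  (hrank : forall i, \rank (G i) = k i)
  (hd : forall i, (2 <= dmin (G i))%N) :
  (exitCND J rhoS rho G)^`().[0] =
    - \sum_(2 <= j < J.+1) ((j - 1)%:R * rhoS j)
    - \sum_(i < m | dmin (G i) == 2%N)
        (2 * rho i / (n i)%:R * (Delta (G i))%:R).
Proof.
rewrite dc /exitCND coefD !coef_sum -!sumrN; congr (_ + _).
  by apply: eq_bigr => j _; rewrite coefZ L_d mulrN mulrC.
rewrite [RHS]big_mkcond /=; apply: eq_bigr => i _; rewrite coefZ exitCN_c1 //.
case: eqP => h.
  by rewrite mulrN !mulrA [rho i * 2]mulrC.
rewrite Delta0 // ?mulr0 ?oppr0 ?mulr0 //.
by rewrite ltn_neqAle (hd i) andbT eq_sym; apply/eqP.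
Qed.
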